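(* Let $n\ge2$ and $\mathsf u\in\mathcal S_n$. Arrange the $n(n-1)$ positions of $\bm\lambda_n$ in an array with $n$ rows and $n-1$ columns, position $j$ lying in row $\lceil j/(n-1)\rceil$ and column $((j-1)\bmod (n-1))+1$. Then each of the $n-1$ columns contains exactly one negative skip of $\mathsf u$, and each row except the last (i.e. each of rows $1,\dots,n-1$) contains exactly one negative skip of $\mathsf u$.
   Context: $\widetilde S_n$ is the group, under composition $(vw)(k)=v(w(k))$, of bijections $w:\mathbb Z\to\mathbb Z$ with $w(i+n)=w(i)+n$ and $\sum_{i=1}^n w(i)=\binom{n+1}2$. For $i\not\equiv j\pmod n$, $(\!(i,j)\!)$ swaps $i+kn$ and $j+kn$ for all $k$; $(\!(i,j)\!)=(\!(j,i)\!)=(\!(i+kn,j+kn)\!)$; $s_i=(\!(i,i+1)\!)$, $i\in\{0,\dots,n-1\}$. ''$i\bmod n$'' is the representative of $i$ modulo $n$ in $\{1,\dots,n\}$. $\bm\lambda_n$ is the word $[s_0,\dots,s_{n-1}]$ repeated $n-1$ times with $j$-th letter $\sigma_j=s_{(j-1)\bmod n}$ (index in $\{0,\dots,n-1\}$). A subword is $\mathsf u=[u_1,\dots,u_{n(n-1)}]$ with $u_j\in\{\sigma_j,e\}$; $j$ is a skip if $u_j=e$. $u_{(j)}=u_1\cdots u_j$, $u_{(0)}=e$. $\mathcal S_n$ is the set of subwords with exactly $2n-2$ skips and product $e$. For a skip $j$, its reflection is $t_j=u_{(j-1)}\sigma_ju_{(j-1)}^{-1}$. The skip $j$ is negative if,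 writing $t_j=(\!(a,b)\!)$ with integers $a<b$, one has $1\le (b\bmod n)<(a\bmod n)\le n$; otherwise it is positive. *)

(* Defs.v *)
(* Affine permutations of Z are modelled as functions int -> int. *)
From mathcomp Require Import all_boot all_order all_algebra.
Set Implicit Arguments. Unset Strict Implicit. Unset Printing Implicit Defensive.
Import Order.TTheory GRing.Theory Num.Theory intZmod.
Local Open Scope ring_scope.

(* ((a,b)) : swaps a+kn and b+kn for all k (meaningful when a <> b mod n). *)
Definition atrans (n : nat) (a b : int) : int -> int := fun x =>
  if ((x - a) %% n)%Z == 0 then x + (b - a)
  else if ((x - b) %% n)%Z == 0 then x + (a - b) else x.

Definition gen (n : nat) (i : int) : int -> int := atrans n i (i + 1).

Definition sigma (n j : nat) : int -> int := gen n ((j.-1 %% n)%N)%:Z.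

(* A subword of lambda_n is a list u of n(n-1) booleans; the j-th entry
   (j = 1..n(n-1), stored at list index j-1) is true iff j is a skip. *)
Definition is_skip (n : nat) (u : seq bool) (j : nat) : bool :=
  [&& (1 <= j)%N, (j <= n * n.-1)%N & nth false u j.-1].

Definition letter (n : nat) (u : seq bool) (j : nat) : int -> int :=
  if nth false u j.-1 then id else sigma n j.

(* u_(j) = u_1 ... u_j, with (vw)(k) = v(w(k)) *)
Fixpoint uprefix (n : nat) (u : seq bool) (j : nat) : int -> int :=
  match j with
  | 0 => id
  | j'.+1 => fun k => uprefix n u j' (letter n u j'.+1 k)
  end.

(* u_(j)^{-1} = u_j ... u_1 (every letter is an involution) *)
Fixpoint uprefix_inv (n : nat) (u : seq bool) (j : nat) : int -> int :=
  match j with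
  | 0 => id
  | j'.+1 => fun k => letter n u j'.+1 (uprefix_inv n u j' k)
  end.

Definition refl_of (n : nat) (u : seq bool) (j : nat) : int -> int :=
  fun k => uprefix n u j.-1 (sigma n j (uprefix_inv n u j.-1 k)).

Definition in_Sn (n : nat) (u : seq bool) : Prop :=
  [/\ size u = (n * n.-1)%N, count id u = (2 * n - 2)%N
    & forall k : int, uprefix n u (n * n.-1) k = k].

Definition modrep (n : nat) (x : int) : int :=
  let r := (x %% n)%Z in if r == 0 then n%:Z else r.

Definition negative_skip (n : nat) (u : seq bool) (j : nat) : Prop :=
  is_skip n u j /\
  exists a b : int, a < b /\ (forall k, refl_of n u j k = atrans n a b k) /\
    (1 <= modrep n b) /\ (modrep n b < modrep n a) /\ (modrep n a <= n%:Z).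

(* position j lies in row ceil(j/(n-1)) and column ((j-1) mod (n-1)) + 1 *)
Definition row_of (n j : nat) : nat := ((j + n.-1.-1) %/ n.-1)%N.
Definition col_of (n j : nat) : nat := ((j.-1 %% n.-1).+1)%N.

(* Main.v *)
Require Import Defs.
From mathcomp Require Import all_boot all_order all_algebra.
From mathcomp Require Import zify ring.
Set Implicit Arguments. Unset Strict Implicit. Unset Printing Implicit Defensive.
Import Order.TTheory GRing.Theory Num.Theory intZmod.
Local Open Scope ring_scope.
Lemma M1 (n : nat) (x q : int) : ((x + q * n) %% n)%Z = (x %% n)%Z.
Proof. by rewrite addrC modzMDl. Qed.
Lemma M2 (n : nat) (x : int) : ((x %% n)%Z == 0) = (n %| x)%Z.
Proof. by apply/idP/idP => [/eqP/dvdz_mod0P|/dvdz_mod0P ->]. Qed.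
Lemma M2' (n : nat) (x : int) : ((x %% n)%Z == 0) -> exists q : int, x = q * n.
Proof. by rewrite M2 => /dvdzP. Qed.
Lemma M2'' (n : nat) (x q : int) : x = q * n -> ((x %% n)%Z == 0).
Proof. by move=> ->; rewrite modzMl. Qed.
Lemma M3 (n : nat) (x : int) : (0 < x < n) -> ((x %% n)%Z == 0) = false.
Proof. move=> /andP[h1 h2]; apply/negbTE/negP=> /M2' [q hq]; have [hq0|hq1] : q <= 0 \/ 1 <= q by lia. all: nia. Qed.
Lemma M3' (n : nat) (x : int) : (- (n%:Z) < x < 0) -> ((x %% n)%Z == 0) = false.
Proof. move=> /andP[h1 h2]; apply/negbTE/negP=> /M2' [q hq]; have [hq0|hq1] : q <= -1 \/ 0 <= q by lia. all: nia. Qed.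

Lemma atrans_per (n : nat) (a b y q : int) :
  atrans n a b (y + q * n) = atrans n a b y + q * n.
Proof.
rewrite /atrans.
have -> : y + q * n - a = (y - a) + q * n by ring.
have -> : y + q * n - b = (y - b) + q * n by ring.
rewrite !M1; case: ifP => _; [ring|case: ifP => _; ring].
Qed.

Lemma letter_per n u j (y q : int) : letter n u j (y + q * n) = letter n u j y + q * n.
Proof. rewrite /letter; case: ifP => _ //; exact: atrans_per. Qed.

Lemma uprefix_per n u t (y q : int) : uprefix n u t (y + q * n) = uprefix n u t y + q * n.
Proof. elim: t y => [|t IH] y //=; by rewrite letter_per IH. Qed.

Lemma gen_val (n : nat) (i y : int) : gen n i y =
  if ((y - i) %% n)%Z == 0 then y + 1 else if ((y - (i + 1)) %% n)%Z == 0 then y - 1 else y.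
Proof. rewrite /gen /atrans; case: ifP => _; [congr (_ + _); ring|case: ifP => _ //; congr (_ + _); ring]. Qed.

Lemma gen_invol (n : nat) (i y : int) : (1 < n)%N -> gen n i (gen n i y) = y.
Proof.
move=> hn; rewrite (gen_val n i y).
case E1: ((y - i) %% n == 0)%Z.
  have [q hq] := M2' E1.
  rewrite gen_val.
  have -> : y + 1 - i = 1 + q * n by lia.
  rewrite M1 M3; last by apply/andP; split; lia.
  have -> : y + 1 - (i + 1) = 0 + q * n by lia.
  rewrite M1 mod0z eqxx; lia.
case E2: ((y - (i + 1)) %% n == 0)%Z.
  have [q hq] := M2' E2.
  rewrite gen_val.
  have -> : y - 1 - i = 0 + q * n by lia.
  rewrite M1 mod0z eqxx; lia.
by rewrite gen_val E1 E2.
Qed.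

Lemma letter_invol n u j y : (1 < n)%N -> letter n u j (letter n u j y) = y.
Proof. move=> hn; rewrite /letter; case: ifP => _ //; exact: gen_invol. Qed.

Lemma uprefix_inv_r n u t k : (1 < n)%N -> uprefix n u t (uprefix_inv n u t k) = k.
Proof. move=> hn; elim: t k => [|t IH] k //=; by rewrite letter_invol. Qed.

Lemma uprefix_inv_l n u t y : (1 < n)%N -> uprefix_inv n u t (uprefix n u t y) = y.
Proof. move=> hn; elim: t y => [|t IH] y //=; by rewrite IH letter_invol. Qed.

Lemma uprefix_modinj n u t y1 y2 : (1 < n)%N ->
  ((uprefix n u t y1 - uprefix n u t y2) %% n)%Z == 0 -> ((y1 - y2) %% n)%Z == 0.
Proof.
move=> hn /M2' [q hq].
have : uprefix n u t y1 = uprefix n u t (y2 + q * n) by rewrite uprefix_per; lia.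
move=> /(congr1 (uprefix_inv n u t)); rewrite !uprefix_inv_l // => ->.
apply: (@M2'' _ _ q); ring.
Qed.

Lemma modnat_shift (n t : nat) (y : int) :
  ((y - ((t %% n)%N)%:Z) %% n)%Z = ((y - t%:Z) %% n)%Z.
Proof.
have ht := divn_eq t n.
have -> : y - ((t %% n)%N)%:Z = (y - t%:Z) + ((t %/ n)%N)%:Z * n.
  rewrite {2}ht PoszD PoszM; ring.
by rewrite M1.
Qed.

Lemma refl_eq n u j k : (1 < n)%N -> (1 <= j)%N ->
  refl_of n u j k = atrans n (uprefix n u j.-1 (j.-1)%:Z) (uprefix n u j.-1 j%:Z) k.
Proof.
move=> hn hj; rewrite /refl_of /sigma.
set t := j.-1.
have hjt : j%:Z = t%:Z + 1 by rewrite /t; case: (j) hj => // j' _ /=; rewrite -addn1 PoszD.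
set y := uprefix_inv n u t k.
have hk : uprefix n u t y = k by rewrite uprefix_inv_r.
rewrite gen_val modnat_shift.
have -> : y - (((t %% n)%N)%:Z + 1) = (y - 1) - ((t %% n)%N)%:Z by ring.
rewrite modnat_shift.
set a := uprefix n u t t%:Z; set b := uprefix n u t j%:Z.
have hab : ((b - a) %% n)%Z == 0 = false.
  apply/negbTE/negP => /uprefix_modinj => /(_ hn).
  rewrite hjt (_ : t%:Z + 1 - t%:Z = 1); last by ring.
  by rewrite M3 //; apply/andP; split; lia.
case E1: ((y - t%:Z) %% n == 0)%Z.
  have [q hq] := M2' E1.
  rewrite -hk.
  have -> : y + 1 = j%:Z + q * n by lia.
  have -> : y = t%:Z + q * n by lia.
  rewrite !uprefix_per -/a -/b /atrans.
  rewrite (_ : a + q * n - a = 0 + q * n); last by ring.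
  rewrite M1 mod0z eqxx; ring.
case E2: ((y - 1 - t%:Z) %% n == 0)%Z.
  have [q hq] := M2' E2.
  rewrite -hk.
  have -> : y - 1 = t%:Z + q * n by lia.
  have -> : y = j%:Z + q * n by lia.
  rewrite !uprefix_per -/a -/b /atrans.
  rewrite (_ : b + q * n - a = (b - a) + q * n); last by ring.
  rewrite M1 hab.
  rewrite (_ : b + q * n - b = 0 + q * n); last by ring.
  rewrite M1 mod0z eqxx; ring.
rewrite hk /atrans.
case: ifP => [h|_].
  have : ((uprefix n u t y - uprefix n u t t%:Z) %% n)%Z == 0 by rewrite hk.
  by move/(uprefix_modinj hn); rewrite E1.
case: ifP => [h|//].
have : ((uprefix n u t y - uprefix n u t j%:Z) %% n)%Z == 0 by rewrite hk.
move/(uprefix_modinj hn).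
by rewrite hjt (_ : y - (t%:Z + 1) = y - 1 - t%:Z) ?E2 //; ring.
Qed.
Lemma L2 (m t : nat) : (0 < m)%N -> (t.+1 %/ m = t %/ m + (t.+1 %% m == 0%N))%N.
Proof. by move=> hm; rewrite divnS // addnC. Qed.
Lemma Ldm (m t : nat) : (0 < m)%N -> ((t + m) %/ m = t %/ m + 1)%N.
Proof. by move=> hm; rewrite divnDr ?dvdnn // divnn hm. Qed.
Lemma col_lt (n y : nat) : (1 < n)%N -> (1 <= col_of n y <= n.-1)%N.
Proof. move=> hn; rewrite /col_of /= ltn_mod; lia. Qed.
Lemma col_ne (n t y : nat) : (1 < n)%N -> (t.+1 < y <= t + n.-1)%N -> col_of n y != col_of n t.+1.
Proof.
move=> hn hy; rewrite /col_of /= eqSS.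
have -> : y.-1 = (t + (y.-1 - t))%N by lia.
apply/negP => /eqP h; have : (t + (y.-1 - t) == t + 0 %[mod n.-1])%N by rewrite addn0 h. rewrite eqn_modDl mod0n modn_small; lia.
Qed.
Lemma col_n (n t : nat) : (1 < n)%N -> col_of n (t + n) = col_of n t.+1.
Proof. move=> hn; rewrite /col_of /=; have -> : (t + n).-1 = (t + n.-1)%N by lia. by rewrite modnDr. Qed.

Record st := St { car : nat; res : nat -> nat; dec : nat -> nat }.

Definition skipb (u : seq bool) (j : nat) : bool := nth false u j.-1.

Definition stepf (n : nat) (u : seq bool) (t : nat) (s : st) : st :=
  let c := (t %% n.-1).+1 in
  let car' := if skipb u t.+1 then res s c else car s in
  St car'
     (if skipb u t.+1 then (fun d => if d == c then car s else res s d) else res s)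
     (if (t.+1 %% n.-1 == 0)%N then (fun p => if p == car' then (dec s p).+1 else dec s p)
      else dec s).

Fixpoint stt (n : nat) (u : seq bool) (t : nat) : st :=
  match t with 0 => St 0 id (fun _ => 0%N) | t'.+1 => stepf n u t' (stt n u t') end.

Definition val (n : nat) (s : st) (p : nat) : int := p%:Z - (n * dec s p)%N%:Z.

Definition Dist (n : nat) (s : st) : Prop :=
  [/\ (car s < n)%N,
      (forall k, (1 <= k <= n.-1)%N -> (res s k < n)%N /\ res s k != car s) &
      (forall k1 k2, (1 <= k1 <= n.-1)%N -> (1 <= k2 <= n.-1)%N -> res s k1 = res s k2 -> k1 = k2)].

Lemma Dist_stt n u t : (1 < n)%N -> Dist n (stt n u t).
Proof.
move=> hn; elim: t => [|t [h1 h2 h3]] /=.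
  split => //=; [lia| move=> k hk; split; [lia|apply/eqP; lia]].
rewrite /stepf; case: ifP => hs; last by split.
have hc : (1 <= (t %% n.-1).+1 <= n.-1)%N by rewrite ltn_mod; lia.
split => /=.
- by case: (h2 _ hc).
- move=> k hk; case: ifP => [_|hkc].
    by case: (h2 _ hc) => _; rewrite eq_sym.
  case: (h2 _ hk) => -> _; split => //; apply/negP => /eqP h.
  by move: hkc; rewrite (h3 _ _ hk hc h) eqxx.
- move=> k1 k2 hk1 hk2; case: ifP => [/eqP e1|hk1c]; case: ifP => [/eqP e2|hk2c].
  + by rewrite e1 e2.
  + by move=> h; case: (h2 _ hk2) => _; rewrite h eqxx.
  + by move=> h; case: (h2 _ hk1) => _; rewrite -h eqxx.
  + exact: h3.
Qed.

Lemma sig_val (n t : nat) (y : int) : sigma n t.+1 y =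
  if ((y - t%:Z) %% n)%Z == 0 then y + 1 else if ((y - 1 - t%:Z) %% n)%Z == 0 then y - 1 else y.
Proof.
rewrite /sigma /= gen_val modnat_shift.
by rewrite (_ : y - (((t %% n)%N)%:Z + 1) = (y - 1) - ((t %% n)%N)%:Z) ?modnat_shift //; ring.
Qed.

Lemma sig_mid (n t : nat) (y : int) : (1 < n)%N -> t%:Z + 2 <= y <= t%:Z + n%:Z - 1 -> sigma n t.+1 y = y.
Proof.
move=> hn /andP[h1 h2]; rewrite sig_val M3; last by apply/andP; split; lia.
by rewrite M3 //; apply/andP; split; lia.
Qed.

Lemma sig_t1 (n t : nat) : (1 < n)%N -> sigma n t.+1 (t%:Z + 1) = t%:Z.
Proof.
move=> hn; rewrite sig_val (_ : t%:Z + 1 - t%:Z = 1); last by ring.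
rewrite M3; last by apply/andP; split; lia.
rewrite (_ : t%:Z + 1 - 1 - t%:Z = 0); last by ring.
rewrite mod0z eqxx; ring.
Qed.

Lemma sig_tn (n t : nat) : (1 < n)%N -> sigma n t.+1 (t%:Z + n%:Z) = t%:Z + 1 + 1 * n%:Z.
Proof.
move=> hn; rewrite sig_val (_ : t%:Z + n%:Z - t%:Z = 0 + 1 * n%:Z); last by ring.
rewrite M1 mod0z eqxx; ring.
Qed.

Definition RA (n : nat) (u : seq bool) (t : nat) : Prop :=
  uprefix n u t t%:Z = val n (stt n u t) (car (stt n u t)) + (n * (t %/ n.-1))%N%:Z /\
  forall y : nat, (t < y <= t + n.-1)%N ->
    uprefix n u t y%:Z = val n (stt n u t) (res (stt n u t) (col_of n y)) + (n * (y.-1 %/ n.-1))%N%:Z.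

Lemma RA_all n u t : (1 < n)%N -> RA n u t.
Proof.
move=> hn; have hm : (0 < n.-1)%N by lia.
elim: t => [|t [IH1 IH2]].
  split; first by rewrite /= /val /= div0n !muln0.
  move=> y hy /=; rewrite /val /col_of /= !modn_small; try lia.
  rewrite divn_small; lia.
have [D1 D2 D3] := Dist_stt u t hn.
set s := stt n u t in IH1 IH2 D1 D2 D3 *.
have hs' : stt n u t.+1 = stepf n u t s by [].
have hc : (1 <= (t %% n.-1).+1 <= n.-1)%N by rewrite ltn_mod; lia.
have hcol : col_of n t.+1 = (t %% n.-1).+1 by [].
have hL2 := L2 t hm.
have hdiv : (t.+1.-1 %/ n.-1 = t %/ n.-1)%N by [].
have hcast : (t.+1)%:Z = t%:Z + 1 by rewrite -addn1 PoszD.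
rewrite /RA hs' /stepf /=.
case hsk: (skipb u t.+1); rewrite /letter /skipb in hsk *; rewrite hsk.
-
  have Hr := IH2 t.+1 ltac:(lia); rewrite hcol hdiv in Hr.
  split.
    rewrite Hr /val /= hL2; case: ifP => hb /=; rewrite ?eqxx /=; lia.
  move=> y hy.
  case: (ltnP y (t + n)) => hyn.
    have hne := col_ne hn (_ : (t.+1 < y <= t + n.-1)%N).
    rewrite IH2; last by lia.
    rewrite /val /=.
    have hne' : (col_of n y == (t %% n.-1).+1) = false by apply/negbTE; rewrite -hcol; apply: hne; lia.
    rewrite hne'.
    have hrr : (res s (col_of n y) == res s (t %% n.-1).+1) = false.
      apply/negbTE/negP => /eqP h; move: hne'; rewrite (D3 _ _ (col_lt y hn) hc h) eqxx //.
    case: ifP => _; rewrite ?hrr //.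
  have -> : y = (t + n)%N by lia.
  rewrite col_n // hcol eqxx.
  have -> : ((t + n)%N)%:Z = t%:Z + 1 * n%:Z by rewrite PoszD; ring.
  rewrite uprefix_per /= IH1 /val /=.
  have -> : ((t + n).-1 = t + n.-1)%N by lia.
  rewrite Ldm //.
  have hcr : (car s == res s (t %% n.-1).+1) = false.
    by apply/negbTE; case: (D2 _ hc) => _; rewrite eq_sym.
  case: ifP => _; rewrite ?hcr /=; lia.
-
  split.
    rewrite hcast sig_t1 // IH1 /val /= hL2; case: ifP => hb /=; rewrite ?eqxx /=; lia.
  move=> y hy.
  case: (ltnP y (t + n)) => hyn.
    rewrite sig_mid //; last by apply/andP; split; lia.
    rewrite IH2; last by lia.
    rewrite /val /=.
    have hrr : (res s (col_of n y) == car s) = false.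
      by apply/negbTE; case: (D2 _ (col_lt y hn)).
    case: ifP => _; rewrite ?hrr //.
  have -> : y = (t + n)%N by lia.
  rewrite PoszD sig_tn // uprefix_per -hcast IH2; last by lia.
  rewrite hdiv col_n // hcol /val /=.
  have -> : ((t + n).-1 = t + n.-1)%N by lia.
  rewrite Ldm //.
  have hcr : (res s (t %% n.-1).+1 == car s) = false.
    by apply/negbTE; case: (D2 _ hc).
  case: ifP => _; rewrite ?hcr /=; lia.
Qed.

Lemma car_S n u t : car (stt n u t.+1) =
  if skipb u t.+1 then res (stt n u t) (col_of n t.+1) else car (stt n u t).
Proof. by []. Qed.

Lemma res_S n u t d : res (stt n u t.+1) d =
  if skipb u t.+1 then (if d == col_of n t.+1 then car (stt n u t) else res (stt n u t) d)
  else res (stt n u t) d.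
Proof. by rewrite /= /stepf /=; case: (skipb u t.+1). Qed.

Lemma dec_S n u t p : dec (stt n u t.+1) p =
  (dec (stt n u t) p + ((t.+1 %% n.-1 == 0)%N && (p == car (stt n u t.+1))))%N.
Proof.
rewrite [in LHS]/= /stepf /=; case: ifP => _ /=; last by rewrite addn0.
by case: ifP => _; rewrite ?addn1 ?addn0.
Qed.

Definition OT n u p t := count (fun t' => car (stt n u t') == p) (iota 1 t).

Lemma OT_S n u p t : OT n u p t.+1 = (OT n u p t + (car (stt n u t.+1) == p))%N.
Proof.
have h1 : forall (P : pred nat) x, count P [:: x] = P x by move=> P x /=; rewrite addn0.
by rewrite /OT -[t.+1]addn1 iotaD count_cat (_ : iota (1 + t) 1 = [:: t + 1]) ?h1 // addnC.
Qed.

Lemma dec_mono n u p s t : (s <= t)%N -> (dec (stt n u s) p <= dec (stt n u t) p)%N.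
Proof.
move=> /subnK <-; elim: (t - s)%N => [|k IH] //.
by rewrite addSn dec_S (leq_trans IH) ?leq_addr.
Qed.

Lemma dec_const n u p s t : (s <= t)%N ->
  (forall t', (s < t' <= t)%N -> car (stt n u t') != p) -> dec (stt n u t) p = dec (stt n u s) p.
Proof.
move=> /subnK <-; elim: (t - s)%N => [|k IH] // h.
rewrite addSn dec_S IH; last by move=> t' ht'; apply: h; lia.
have := h (k + s).+1 ltac:(lia); rewrite eq_sym => /negbTE ->.
by rewrite andbF addn0.
Qed.

Lemma res_const n u c s t : (s <= t)%N ->
  (forall j, (s < j <= t)%N -> ~~ (skipb u j && (col_of n j == c))) ->
  res (stt n u t) c = res (stt n u s) c.
Proof.
move=> /subnK <-; elim: (t - s)%N => [|k IH] // h.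
rewrite addSn res_S IH; last by move=> j hj; apply: h; lia.
have := h (k + s).+1 ltac:(lia).
by case: (skipb u _) => //=; rewrite eq_sym => /negbTE ->.
Qed.

Lemma OT_split n u p s t : (s <= t)%N ->
  OT n u p t = (OT n u p s + count (fun t' => car (stt n u t') == p) (iota s.+1 (t - s)))%N.
Proof.
move=> hst; rewrite /OT.
by rewrite -{1}(subnK hst) addnC iotaD count_cat add1n.
Qed.

Lemma Inv n u t : (1 < n)%N ->
  ((n.-1 * dec (stt n u t) (car (stt n u t)) + t %% n.-1 =
    (car (stt n u t)).-1 + OT n u (car (stt n u t)) t)%N) /\
  (forall k, (1 <= k <= n.-1)%N ->
    (n.-1 * dec (stt n u t) (res (stt n u t) k) + k.-1 =
     (res (stt n u t) k).-1 + OT n u (res (stt n u t) k) t)%N).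
Proof.
move=> hn; have hm : (0 < n.-1)%N by lia.
elim: t => [|t [IH1 IH2]].
  split; first by rewrite /OT /= muln0 mod0n.
  by move=> k hk; rewrite /OT /=; lia.
have [D1 D2 D3] := Dist_stt u t hn.
have [E1 E2 E3] := Dist_stt u t.+1 hn.
have hc : (1 <= col_of n t.+1 <= n.-1)%N by apply: col_lt.
have hcm : col_of n t.+1 = (t %% n.-1).+1 by [].
have hL : (n.-1 * (t.+1 %% n.-1 == 0%N) + t.+1 %% n.-1 = t %% n.-1 + 1)%N.
  have h1 := divn_eq t n.-1; have h2 := divn_eq t.+1 n.-1; have h3 := L2 t hm.
  move: h1 h2 h3; case: (t.+1 %% n.-1 == 0)%N => /=; nia.
split.
- rewrite OT_S dec_S eqxx andbT car_S.
  case hs: (skipb u t.+1).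
  + have h := IH2 _ hc.
    have e : (col_of n t.+1).-1 = (t %% n.-1)%N by [].
    rewrite e in h; simpl nat_of_bool; lia.
  + simpl nat_of_bool; lia.
- move=> k hk; rewrite OT_S dec_S.
  have hne : (res (stt n u t.+1) k == car (stt n u t.+1)) = false.
    by apply/negbTE; case: (E2 _ hk).
  rewrite hne andbF addn0 eq_sym hne addn0.
  rewrite res_S in hne *; rewrite car_S in hne.
  case hs: (skipb u t.+1); rewrite hs in hne *.
  + case: ifP => hkc.
      have := IH1; rewrite (eqP hkc) hcm; lia.
    exact: IH2.
  + exact: IH2.
Qed.

Lemma colNk (n k : nat) : (1 < n)%N -> (1 <= k <= n.-1)%N ->
  col_of n (n * n.-1 + k) = k /\ ((n * n.-1 + k).-1 %/ n.-1 = n)%N.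
Proof.
move=> hn hk; have hm : (0 < n.-1)%N by lia.
rewrite /col_of.
have -> : ((n * n.-1 + k).-1 = n * n.-1 + k.-1)%N by lia.
rewrite modnMDl divnMDl // modn_small ?divn_small; lia.
Qed.

Lemma Fin n u : (1 < n)%N -> in_Sn n u ->
  [/\ car (stt n u (n * n.-1)) = 0%N, dec (stt n u (n * n.-1)) 0 = 1%N &
  forall k, (1 <= k <= n.-1)%N -> res (stt n u (n * n.-1)) k = k /\ dec (stt n u (n * n.-1)) k = 1%N].
Proof.
move=> hn [_ _ hid]; have hm : (0 < n.-1)%N by lia.
have [R1 R2] := RA_all u (n * n.-1) hn.
have [D1 D2 D3] := Dist_stt u (n * n.-1) hn.
have hnm : n = (n.-1).+1 by lia.
move: R1; rewrite hid mulnK // /val => R1.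
have hcd : car (stt n u (n * n.-1)) = 0%N /\ dec (stt n u (n * n.-1)) (car (stt n u (n * n.-1))) = 1%N.
  move: R1 D1; set c := car _; set d := dec _ _ => R1 D1.
  have [hd|[hd|hd]] : d = 0%N \/ d = 1%N \/ (2 <= d)%N by lia.
  - rewrite hd in R1; nia.
  - rewrite hd in R1; split; [nia|by []].
  - nia.
case: hcd => hc hd; split => //; first by rewrite hc in hd.
move=> k hk; have [hk1 hk2] := colNk hn hk.
have := R2 (n * n.-1 + k)%N ltac:(lia).
rewrite hid hk1 hk2 /val.
have := D2 _ hk; case => D2k _.
set c := res _ _; set d := dec _ _ => R.
have [hd'|[hd'|hd']] : d = 0%N \/ d = 1%N \/ (2 <= d)%N by lia.
- rewrite hd' in R; nia.
- rewrite hd' in R; have hck : c = k by nia. by split => //; rewrite -{1}hck.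
- nia.
Qed.

Definition Sc n u c := [seq j <- iota 1 (n * n.-1) | skipb u j && (col_of n j == c)].

Lemma sumn_map0 (l : seq nat) : sumn [seq 0%N | c <- l] = 0%N.
Proof. by elim: l. Qed.

Lemma sumn_mapD (g h : nat -> nat) l :
  sumn [seq (g c + h c)%N | c <- l] = (sumn (map g l) + sumn (map h l))%N.
Proof. elim: l => //= x l ->; lia. Qed.

Lemma sumn_count_col (P : pred nat) (f : nat -> nat) m s :
  (forall j, j \in s -> (1 <= f j <= m)%N) ->
  sumn [seq count (fun j => P j && (f j == c)) s | c <- iota 1 m] = count P s.
Proof.
elim: s => [|x s IH] hs /=; first exact: sumn_map0.
rewrite sumn_mapD IH; last by move=> j hj; apply: hs; rewrite inE hj orbT.
congr (_ + _)%N.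
rewrite sumn_count; case: (P x) => /=; last by rewrite count_pred0.
rewrite (eq_count (a2 := pred1 (f x))); last by move=> c /=; rewrite eq_sym.
rewrite count_uniq_mem ?iota_uniq // mem_iota.
have := hs x; rewrite inE eqxx => /(_ isT) h; apply/eqP; rewrite eqb1; lia.
Qed.

Lemma sum_Sc n u : (1 < n)%N ->
  sumn [seq size (Sc n u c) | c <- iota 1 n.-1] = count (skipb u) (iota 1 (n * n.-1)).
Proof.
move=> hn; rewrite -(@sumn_count_col (skipb u) (col_of n) n.-1); last by move=> j _; apply: col_lt.
by congr sumn; apply: eq_map => c; rewrite size_filter.
Qed.

Lemma count_skip (u : seq bool) N : size u = N -> count (skipb u) (iota 1 N) = count id u.
Proof.
move=> hs; rewrite -{2}(mkseq_nth false u) /mkseq hs count_map.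
have -> : iota 1 N = [seq (1 + i)%N | i <- iota 0 N] by rewrite -iotaDl.
rewrite count_map; apply: eq_count => i /=; by rewrite /skipb.
Qed.

Lemma res_skip n u t : skipb u t.+1 -> res (stt n u t.+1) (col_of n t.+1) = car (stt n u t).
Proof. by move=> h; rewrite res_S h eqxx. Qed.

Lemma car_skip n u t : skipb u t.+1 -> car (stt n u t.+1) = res (stt n u t) (col_of n t.+1).
Proof. by move=> h; rewrite car_S h. Qed.

Lemma mem_Sc n u c j : (j \in Sc n u c) = [&& (0 < j <= n * n.-1)%N, skipb u j & col_of n j == c].
Proof. rewrite /Sc mem_filter mem_iota andbC; congr (_ && _); apply/idP/idP; lia. Qed.

Lemma res_stay n u c t : (1 < n)%N -> (1 <= c <= n.-1)%N ->
  res (stt n u t) c = c -> car (stt n u t) != c.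
Proof. move=> hn hc h; have [_ D2 _] := Dist_stt u t hn; case: (D2 _ hc) => _; by rewrite h eq_sym. Qed.

Lemma Sc_ge2 n u c : (1 < n)%N -> in_Sn n u -> (1 <= c <= n.-1)%N -> (2 <= size (Sc n u c))%N.
Proof.
move=> hn hS hc; have hm : (0 < n.-1)%N by lia.
have [F1 F2 F3] := Fin hn hS.
set N := (n * n.-1)%N in F1 F2 F3 *.
case E: (Sc n u c) => [|j1 [|j2 l]] //=; exfalso.
- have ns : forall j, (0 < j <= N)%N -> ~~ (skipb u j && (col_of n j == c)).
    move=> j hj; apply/negP => h; have : j \in Sc n u c by rewrite mem_Sc hj.
    by rewrite E.
  have hr : forall t, (t <= N)%N -> res (stt n u t) c = c.
    move=> t ht; rewrite (@res_const n u c 0 t) //; move=> j hj; apply: ns; lia.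
  have hOT : OT n u c N = 0%N.
    rewrite /OT (eq_in_count (a2 := pred0)) ?count_pred0 //.
    move=> t; rewrite mem_iota => ht /=; apply/negbTE; apply: res_stay => //; apply: hr; lia.
  have [_ I2] := Inv u N hn.
  have := I2 _ hc; rewrite hr // hOT.
  case: (F3 _ hc) => _ ->; lia.
- have hj1 : j1 \in Sc n u c by rewrite E inE.
  rewrite mem_Sc in hj1; case/and3P: hj1 => hj1 hsk /eqP hcol.
  have ns : forall j, (0 < j <= N)%N -> j != j1 -> ~~ (skipb u j && (col_of n j == c)).
    move=> j hj hne; apply/negP => h; have : j \in Sc n u c by rewrite mem_Sc hj.
    by rewrite E inE (negbTE hne).
  have e1 : res (stt n u N) c = res (stt n u j1) c.
    apply: res_const; first lia; move=> j hj; apply: ns; lia.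
  have e2 : res (stt n u j1.-1) c = c.
    rewrite (@res_const n u c 0 j1.-1) //; move=> j hj; apply: ns; lia.
  have e3 : res (stt n u j1) c = car (stt n u j1.-1).
    have hj1' : (0 < j1)%N by lia.
    move: hsk hcol; rewrite -(prednK hj1') => hsk hcol; by rewrite -hcol res_skip.
  have := res_stay hn hc e2; rewrite -e3 -e1.
  by case: (F3 _ hc) => -> _; rewrite eqxx.
Qed.

Lemma sumn_ge2 (f : nat -> nat) (l : seq nat) :
  (forall c, c \in l -> (2 <= f c)%N) -> (2 * size l <= sumn [seq f c | c <- l])%N.
Proof.
elim: l => [|x l IH] //= h.
have := h x (mem_head _ _); have := IH (fun y hy => h y (ltac:(by rewrite inE hy orbT))); lia.
Qed.

Lemma sumn_all2 (f : nat -> nat) (l : seq nat) :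
  (forall c, c \in l -> (2 <= f c)%N) -> sumn [seq f c | c <- l] = (2 * size l)%N ->
  forall c, c \in l -> f c = 2%N.
Proof.
elim: l => [|x l IH] //= h hs c; rewrite inE => /orP [/eqP ->|hc].
  have := @sumn_ge2 f l (fun y hy => h y (ltac:(by rewrite inE hy orbT))).
  have := h x (mem_head _ _); lia.
apply: IH => //; first by move=> c' hc'; apply: h; rewrite inE hc' orbT.
have := @sumn_ge2 f l (fun y hy => h y (ltac:(by rewrite inE hy orbT))).
have := h x (mem_head _ _); lia.
Qed.

Lemma col_struct n u c : (1 < n)%N -> in_Sn n u -> (1 <= c <= n.-1)%N ->
  exists j1 j2, [/\ (0 < j1 < j2)%N && (j2 <= n * n.-1)%N,
    skipb u j1 && (col_of n j1 == c), skipb u j2 && (col_of n j2 == c) &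
    forall j, (0 < j <= n * n.-1)%N -> skipb u j && (col_of n j == c) -> j = j1 \/ j = j2].
Proof.
move=> hn hS hc.
have h2 : size (Sc n u c) = 2%N.
  apply: (@sumn_all2 (fun c => size (Sc n u c)) (iota 1 n.-1)).
  - by move=> c'; rewrite mem_iota => hc'; apply: Sc_ge2 => //; lia.
  - rewrite sum_Sc // count_skip; last by case: hS.
    by case: hS => _ -> _; rewrite size_iota; lia.
  - by rewrite mem_iota; lia.
have hsort : sorted ltn (Sc n u c) by apply: sorted_filter; [exact: ltn_trans|exact: iota_ltn_sorted].
case E: (Sc n u c) h2 hsort => [|j1 [|j2 [|j3 l]]] //= _ /andP[hlt _].
have hj1 : j1 \in Sc n u c by rewrite E inE eqxx.
have hj2 : j2 \in Sc n u c by rewrite E !inE eqxx orbT.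
rewrite !mem_Sc in hj1 hj2.
case/and3P: hj1 => hj1 hs1 hc1; case/and3P: hj2 => hj2 hs2 hc2.
exists j1, j2; split => //; [apply/andP; split; lia|by rewrite hs1|by rewrite hs2|].
move=> j hj hsc; have : j \in Sc n u c by rewrite mem_Sc hj.
by rewrite E !inE => /orP [/eqP ->|/eqP ->]; [left|right].
Qed.

Definition Xv n u t : int := val n (stt n u t) (car (stt n u t)).
Definition Rv n u j : int := val n (stt n u j.-1) (res (stt n u j.-1) (col_of n j)).

Lemma OT_zero n u c s t : (1 < n)%N -> (1 <= c <= n.-1)%N -> (s <= t)%N ->
  (forall t', (s < t' <= t)%N -> res (stt n u t') c = c) ->
  OT n u c t = OT n u c s.
Proof.
move=> hn hc hst h; rewrite (@OT_split n u c s t hst) (eq_in_count (a2 := pred0)) ?count_pred0 ?addn0 //.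
move=> t'; rewrite mem_iota => ht' /=; apply/negbTE; apply: res_stay => //; apply: h; lia.
Qed.

Lemma OT_pos n u p s t j : (s <= t)%N -> (s < j <= t)%N -> car (stt n u j) = p ->
  (OT n u p s < OT n u p t)%N.
Proof.
move=> hst hj hc; rewrite (@OT_split n u p s t hst).
have : has (fun t' => car (stt n u t') == p) (iota s.+1 (t - s)).
  by apply/hasP; exists j; [rewrite mem_iota; lia|rewrite hc].
rewrite has_count; lia.
Qed.

Lemma bound_arith (n p c d o : nat) : (1 < n)%N -> (1 <= c <= n.-1)%N -> (p <= n.-1)%N ->
  (n.-1 * d + c.-1 = p.-1 + o)%N -> (o < n.-1)%N -> ((0 < p)%N -> (0 < o)%N) ->
  (c%:Z - n%:Z < p%:Z - (n * d)%N%:Z < c%:Z).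
Proof.
move=> hn hc hp I ho hpos.
have [hd|[hd|hd]] : d = 0%N \/ d = 1%N \/ (2 <= d)%N by lia.
- rewrite hd in I *; case: (posnP p) => hp0.
    rewrite hp0 in I; apply/andP; split; lia.
  move: (hpos hp0) => ho'; apply/andP; split; lia.
- rewrite hd in I *; case: (posnP p) => hp0.
    rewrite hp0 in I; exfalso; lia.
  move: (hpos hp0) => ho'; apply/andP; split; lia.
- exfalso; have : (n.-1 * 2 <= n.-1 * d)%N by rewrite leq_mul2l hd orbT.
  lia.
Qed.

Lemma col_vals n u c j1 j2 : (1 < n)%N -> in_Sn n u -> (1 <= c <= n.-1)%N ->
  (0 < j1 < j2)%N && (j2 <= n * n.-1)%N ->
  skipb u j1 && (col_of n j1 == c) -> skipb u j2 && (col_of n j2 == c) ->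
  (forall j, (0 < j <= n * n.-1)%N -> skipb u j && (col_of n j == c) -> j = j1 \/ j = j2) ->
  exists x : int, [/\ Xv n u j1.-1 = x, Rv n u j1 = c%:Z, Xv n u j2.-1 = c%:Z - n%:Z,
     Rv n u j2 = x & (c%:Z - n%:Z < x < c%:Z)].
Proof.
move=> hn hS hc /andP[/andP[hj1 hj12] hj2N] /andP[hs1 /eqP hc1] /andP[hs2 /eqP hc2] huniq.
have hm : (0 < n.-1)%N by lia.
have [F1 F2 F3] := Fin hn hS.
set N := (n * n.-1)%N in F1 F2 F3 hj2N huniq.
set t1 := j1.-1; set t2 := j2.-1.
have ej1 : j1 = t1.+1 by rewrite /t1; lia.
have ej2 : j2 = t2.+1 by rewrite /t2; lia.
have ns : forall j, (0 < j <= N)%N -> j != j1 -> j != j2 -> ~~ (skipb u j && (col_of n j == c)).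
  move=> j hj h1 h2; apply/negP => h; case: (huniq j hj h) => /eqP; by rewrite ?(negbTE h1) ?(negbTE h2).
have rc0 : forall t, (t <= t1)%N -> res (stt n u t) c = c.
  move=> t ht; rewrite (@res_const n u c 0 t) //; move=> j hj; apply: ns; lia.
set p := car (stt n u t1).
have hpc : p != c by apply: res_stay => //; apply: rc0.
have rj1 : res (stt n u j1) c = p.
  by move: hs1 hc1; rewrite ej1 => hs1 hc1; rewrite -hc1 res_skip.
have rmid : forall t, (j1 <= t <= t2)%N -> res (stt n u t) c = p.
  move=> t ht; rewrite -rj1; apply: res_const; first lia.
  move=> j hj; apply: ns; lia.
have cj2 : car (stt n u j2) = p.
  move: hs2 hc2; rewrite ej2 => hs2 hc2; rewrite car_skip // hc2; apply: rmid; lia.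
have ct2 : car (stt n u t2) = c.
  have rN : res (stt n u N) c = res (stt n u j2) c.
    apply: res_const; first lia; move=> j hj; apply: ns; lia.
  move: rN; rewrite ej2 -{2}hc2 res_skip; last by rewrite -ej2.
  by case: (F3 _ hc) => -> _.
have rafter : forall t, (j2 <= t <= N)%N -> res (stt n u t) c = c.
  move=> t ht; have : res (stt n u t) c = res (stt n u j2) c.
    apply: res_const; first lia; move=> j hj; apply: ns; lia.
  by move=> ->; rewrite ej2 -{1}hc2 res_skip -?ej2 // ct2.
have [_ I2N] := Inv u N hn.
have [I1t1 _] := Inv u t1 hn.
have [I1t2 _] := Inv u t2 hn.
have [_ I2t1] := Inv u t1 hn.
have dct1 : dec (stt n u t1) c = 0%N.
  have := I2t1 _ hc; rewrite rc0 // (@OT_zero n u c 0 t1) //; last by move=> t' ht'; apply: rc0; lia.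
  rewrite /OT /=; lia.
have OTcN : OT n u c N = n.-1.
  have := I2N _ hc; case: (F3 _ hc) => -> ->; lia.
have tmod1 : (t1 %% n.-1)%N = c.-1 by move: hc1; rewrite ej1 /col_of /=; lia.
have tmod2 : (t2 %% n.-1)%N = c.-1 by move: hc2; rewrite ej2 /col_of /=; lia.
have dct2 : dec (stt n u t2) c = 1%N.
  have := I1t2; rewrite ct2 tmod2.
  rewrite -(@OT_zero n u c t2 N) // ?OTcN; last 2 first.
  - lia.
  - move=> t' ht'; apply: rafter; lia.
  move=> h; have : (n.-1 * dec (stt n u t2) c = n.-1 * 1)%N by lia.
  by move/eqP; rewrite eqn_mul2l; case/orP => /eqP; lia.
have dpt : dec (stt n u t2) p = dec (stt n u t1) p.
  apply: dec_const; first lia.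
  move=> t' ht'; have [_ D2 _] := Dist_stt u t' hn.
  case: (D2 _ hc) => _; rewrite rmid; [by rewrite eq_sym|lia].
have [D1 D2 D3] := Dist_stt u t1 hn.
have OTpN : OT n u p N = n.-1.
  case: (posnP p) => hp0.
    have [I1N _] := Inv u N hn.
    move: I1N; rewrite F1 hp0 F2 /N modnMl; lia.
  have hpk : (1 <= p <= n.-1)%N by rewrite /p; lia.
  have := I2N _ hpk; case: (F3 _ hpk) => -> ->; lia.
have OTinc : (OT n u p t1 < OT n u p N)%N by apply: (OT_pos (j := j2)); lia.
exists (val n (stt n u t1) p); split.
- by [].
- by rewrite /Rv -/t1 hc1 rc0 // /val dct1 muln0 subr0.
- by rewrite /Xv -/t2 ct2 /val dct2 muln1.
- by rewrite /Rv -/t2 hc2 rmid ?/val ?dpt //; lia.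
- have := I1t1; rewrite -/p tmod1 => I.
  have ho : (OT n u p t1 < n.-1)%N by rewrite -OTpN.
  have hpn : (p <= n.-1)%N by rewrite /p; lia.
  have hpos : (0 < p)%N -> (0 < OT n u p t1)%N.
    move=> hp0; have ht1 : (0 < t1)%N.
      case: (posnP t1) => // h0; move: hp0; rewrite /p h0 /=; lia.
    have := @OT_pos n u p 0 t1 t1 (leq0n _) ltac:(lia) erefl.
    by rewrite /OT /=.
  rewrite /val; apply: (bound_arith hn hc hpn I ho hpos).
Qed.

Definition negp n u j : bool := (Xv n u j.-1 <= 0) && (0 < Rv n u j).

Lemma skip_good n u j : (1 < n)%N -> in_Sn n u -> (0 < j <= n * n.-1)%N -> skipb u j ->
  [/\ Xv n u j.-1 < Rv n u j, Rv n u j - Xv n u j.-1 < n%:Z, - n%:Z < Xv n u j.-1 & Rv n u j < n%:Z].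
Proof.
move=> hn hS hj hs.
have hc := col_lt j hn.
have [j1 [j2 [h12 s1 s2 hu]]] := col_struct hn hS hc.
have [x [X1 R1 X2 R2 /andP[hx1 hx2]]] := col_vals hn hS hc h12 s1 s2 hu.
have hcn : (col_of n j < n)%N by lia.
case: (hu j hj); first by rewrite hs eqxx.
- by move=> ->; rewrite X1 R1; split; lia.
- by move=> ->; rewrite X2 R2; split; lia.
Qed.

Lemma col_unique n u c : (1 < n)%N -> in_Sn n u -> (1 <= c <= n.-1)%N ->
  exists j, [/\ (0 < j <= n * n.-1)%N, col_of n j = c, skipb u j & negp n u j] /\
    forall j', (0 < j' <= n * n.-1)%N -> col_of n j' = c -> skipb u j' -> negp n u j' -> j' = j.
Proof.
move=> hn hS hc.
have [j1 [j2 [h12 s1 s2 hu]]] := col_struct hn hS hc.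
have [x [X1 R1 X2 R2 /andP[hx1 hx2]]] := col_vals hn hS hc h12 s1 s2 hu.
case/andP: s1 => s1 /eqP c1; case/andP: s2 => s2 /eqP c2.
have n1 : negp n u j1 = (x <= 0) by rewrite /negp X1 R1; apply/idP/idP => [/andP[]//|->]; rewrite andTb; lia.
have n2 : negp n u j2 = (0 < x) by rewrite /negp X2 R2; apply/idP/idP => [/andP[]//|->]; rewrite andbT; lia.
case: (lerP x 0) => hx.
- exists j1; split; first by split => //; [lia|rewrite n1].
  move=> j' hj' hc' hs' hn'; case: (hu j' hj'); first by rewrite hs' hc' eqxx.
  + by [].
  + by move=> e; move: hn'; rewrite e n2; lia.
- exists j2; split; first by split => //; [lia|rewrite n2].
  move=> j' hj' hc' hs' hn'; case: (hu j' hj'); first by rewrite hs' hc' eqxx.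
  + by move=> e; move: hn'; rewrite e n1; lia.
  + by [].
Qed.

Definition Av n u j : int := if skipb u j then Rv n u j else Xv n u j.-1.

Lemma Xv_step n u t : Xv n u t.+1 = Av n u t.+1 - (n * (t.+1 %% n.-1 == 0)%N)%N%:Z.
Proof.
rewrite /Xv /Av /Rv /val dec_S eqxx andbT car_S /=.
case: (skipb u t.+1); rewrite /col_of /= ?/Xv /val mulnDr PoszD; ring.
Qed.

Lemma mono_count (B A : nat -> int) s L :
  (forall k, (k <= L)%N -> B (s + k)%N <= A (s + k)%N) ->
  (forall k, (k < L)%N -> B (s + k).+1 = A (s + k)%N) ->
  count (fun j => (B j <= 0) && (0 < A j)) (iota s L.+1) = ((B s <= 0) && (0 < A (s + L)%N)) /\
  B s <= A (s + L)%N.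
Proof.
elim: L s => [|L IH] s h1 h2.
  by rewrite /= addn0 addn0; split => //; have := h1 0%N (leqnn _); rewrite addn0.
have [IH1 IH2] := IH s.+1 (fun k hk => ltac:(rewrite addSnnS; apply: h1; lia))
                        (fun k hk => ltac:(rewrite addSnnS; apply: h2; lia)).
have e : B s.+1 = A s by have := h2 0%N ltac:(lia); rewrite addn0.
have hb := h1 0%N (leq0n _); rewrite addn0 in hb.
change (count ?P (iota s L.+2)) with (P s + count P (iota s.+1 L.+1))%N.
rewrite IH1 e addSnnS.
rewrite e addSnnS in IH2.
split; last by lia.
case: (lerP (B s) 0) => hB; case: (ltrP 0 (A s)) => hA /=; try lia.
Qed.

Lemma dec_le1 n u t p : (1 < n)%N -> in_Sn n u -> (t <= n * n.-1)%N -> (p < n)%N ->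
  (dec (stt n u t) p <= 1)%N.
Proof.
move=> hn hS ht hp; have [F1 F2 F3] := Fin hn hS.
apply: (leq_trans (@dec_mono n u p t (n * n.-1) ht)).
case: (posnP p) => [->|hp0]; first by rewrite F2.
by case: (F3 p ltac:(lia)) => _ ->.
Qed.

Lemma dec_bnd n u t : (t.+1 %% n.-1 == 0)%N -> (1 <= dec (stt n u t.+1) (car (stt n u t.+1)))%N.
Proof. by move=> h; rewrite dec_S h eqxx /=; lia. Qed.

Lemma row_count n u r : (1 < n)%N -> in_Sn n u -> (1 <= r <= n.-1)%N ->
  count (fun j => skipb u j && negp n u j) (iota (r.-1 * n.-1).+1 n.-1) = 1%N.
Proof.
move=> hn hS hr; have hm : (0 < n.-1)%N by lia.
have [F1 F2 F3] := Fin hn hS.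
set m := n.-1 in hm hr F1 F2 F3 *.
set T0 := (r.-1 * m)%N.
have hT1 : (T0 + m = r * m)%N by rewrite /T0 -mulSnr prednK //; lia.
have hrm : (r * m <= m * m)%N by rewrite leq_mul2r; apply/orP; right; lia.
have hN : (r * m < n * m)%N by rewrite ltn_mul2r hm /=; lia.
have -> : m = (m.-1).+1 by lia.
rewrite (eq_in_count (a2 := fun j => (Xv n u j.-1 <= 0) && (0 < Av n u j))); last first.
  move=> j _ /=; rewrite /Av /negp; case: (skipb u j) => //=.
  by case: (lerP (Xv n u j.-1) 0) => //= h; rewrite ltNge h.
have := @mono_count (fun j => Xv n u j.-1) (Av n u) T0.+1 m.-1.
case.
- move=> k hk /=; rewrite /Av; case hs: (skipb u _); last by [].
  have hj : (0 < T0.+1 + k <= n * n.-1)%N.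
    apply/andP; split; first by lia.
    have : (T0 + k <= T0 + m.-1)%N by lia.
    rewrite -/m; lia.
  by case: (skip_good hn hS hj hs) => h _ _ _; apply: ltW.
- move=> k hk /=.
  rewrite addSn Xv_step.
  have -> : ((T0 + k).+1 %% n.-1 == 0)%N = false.
    rewrite /T0 -/m -addnS modnMDl modn_small; lia.
  by rewrite muln0 subr0.
- move=> -> _.
  have e1 : (T0.+1 + m.-1 = r * m)%N by lia.
  rewrite e1.
  have hB : Xv n u T0.+1.-1 <= 0.
    rewrite /= /Xv /val.
    have [D1 _ _] := Dist_stt u T0 hn.
    case: (posnP T0) => h0.
      rewrite h0 /=; lia.
    have hb : (1 <= dec (stt n u T0) (car (stt n u T0)))%N.
      rewrite -(prednK h0); apply: dec_bnd; rewrite prednK // /T0 modnMl //.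
    have : (n <= n * dec (stt n u T0) (car (stt n u T0)))%N by rewrite -{1}(muln1 n) leq_mul2l hb orbT.
    lia.
  have hA : 0 < Av n u (r * m).
    have hrm0 : (0 < r * m)%N by rewrite muln_gt0 hm; lia.
    have := Xv_step n u (r * m).-1; rewrite prednK // modnMl eqxx muln1 => hX.
    have hA' : Av n u (r * m) = Xv n u (r * m) + n%:Z by rewrite hX; ring.
    rewrite hA' /Xv /val.
    have [D1 _ _] := Dist_stt u (r * m) hn.
    set q := car (stt n u (r * m)) in D1 *.
    have hd1 : dec (stt n u (r * m)) q = 1%N.
      apply/eqP; rewrite eqn_leq dec_le1 //; last by lia.
      rewrite /q -(prednK hrm0); apply: dec_bnd; rewrite prednK // modnMl //.
    have hq0 : q != 0%N.
      apply/negP => /eqP hq0.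
      have hNm : (n * m = (n * m).-1.+1)%N by rewrite prednK // muln_gt0; lia.
      have : (2 <= dec (stt n u (n * m)) 0)%N.
        rewrite hNm dec_S -hNm modnMl eqxx /= F1 eqxx /=.
        have := @dec_mono n u 0 (r * m) (n * m).-1 ltac:(lia).
        rewrite -hq0 hd1; lia.
      by rewrite F2.
    rewrite hd1 muln1; lia.
  by rewrite hB hA.
Qed.

Lemma modrep_shift (n : nat) (v q : int) : (1 < n)%N -> - n%:Z < v < n%:Z ->
  modrep n (v + q * n%:Z) = if 0 < v then v else v + n%:Z.
Proof.
move=> hn /andP[h1 h2]; rewrite /modrep M1.
case: (lerP 0 v) => h0.
  rewrite modz_small; last by apply/andP; split.
  case: (ltrP 0 v) => hv; first by rewrite gt_eqF.
  have -> : v = 0 by lia.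
  by rewrite eqxx add0r.
rewrite (_ : v = (v + n%:Z) + (-1) * n%:Z); last by ring.
rewrite M1 modz_small; last by apply/andP; split; lia.
rewrite (_ : (0 < (v + n%:Z) + (-1) * n%:Z) = false); last by apply/negbTE; rewrite -leNgt; lia.
rewrite (_ : (v + n%:Z == 0) = false); last by apply/negbTE; rewrite gt_eqF //; lia.
ring.
Qed.

Lemma neg_iff n u j : (1 < n)%N -> in_Sn n u -> (0 < j <= n * n.-1)%N ->
  negative_skip n u j <-> (skipb u j && negp n u j).
Proof.
move=> hn hS hj.
have hisk : is_skip n u j = skipb u j by rewrite /is_skip /skipb; case/andP: hj => -> ->.
have [R1 R2] := RA_all u j.-1 hn.
have Hb := R2 j ltac:(lia).
set d := (j.-1 %/ n.-1)%N in R1 Hb.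
have ha : uprefix n u j.-1 (j.-1)%:Z = Xv n u j.-1 + d%:Z * n%:Z by rewrite R1 /Xv PoszM; ring.
have hb : uprefix n u j.-1 j%:Z = Rv n u j + d%:Z * n%:Z by rewrite Hb /Rv PoszM; ring.
have hrefl : forall k, refl_of n u j k = atrans n (Xv n u j.-1 + d%:Z * n%:Z) (Rv n u j + d%:Z * n%:Z) k.
  by move=> k; rewrite refl_eq ?ha ?hb //; lia.
split.
- case=> hsk [a' [b' [hab [hr [m1 [m2 m3]]]]]].
  rewrite -hisk hsk /=.
  have [g1 g2 g3 g4] := skip_good hn hS hj (ltac:(by rewrite -hisk)).
  set X := Xv n u j.-1 in g1 g2 g3 g4 hrefl *; set R := Rv n u j in g1 g2 g3 g4 hrefl *.
  have e := hr a'; rewrite hrefl in e.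
  have ea : atrans n a' b' a' = b'.
    by rewrite /atrans subrr mod0z eqxx; ring.
  rewrite ea in e; move: e; rewrite /atrans.
  case: ifP => [/M2' [q hq]|_].
    move=> e.
    have ea' : a' = X + (d%:Z + q) * n%:Z by lia.
    have eb' : b' = R + (d%:Z + q) * n%:Z by lia.
    move: m2; rewrite ea' eb' !modrep_shift //; try (apply/andP; split; lia).
    case: (ltrP 0 R) => hR; case: (ltrP 0 X) => hX; move=> hm; rewrite /negp -/X -/R; apply/andP; split; lia.
  case: ifP => [/M2' [q hq]|_] e; lia.
- case/andP => hsk /andP[hX hR].
  split; first by rewrite hisk.
  have [g1 g2 g3 g4] := skip_good hn hS hj hsk.
  exists (Xv n u j.-1 + d%:Z * n%:Z), (Rv n u j + d%:Z * n%:Z).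
  split; first lia.
  split; first exact: hrefl.
  rewrite !modrep_shift //; try (apply/andP; split; lia).
  rewrite hR (_ : (0 < Xv n u j.-1) = false); last by apply/negbTE; rewrite -leNgt.
  split; [lia|split; lia].
Qed.

Lemma count1 (P : pred nat) (s : seq nat) : count P s = 1%N ->
  exists x, [/\ x \in s, P x & forall y, y \in s -> P y -> y = x].
Proof.
rewrite -size_filter; case E: (filter P s) => [|x [|y l]] //= _.
have hx : x \in filter P s by rewrite E inE.
rewrite mem_filter in hx; case/andP: hx => h1 h2.
exists x; split => // y hy hPy.
have : y \in filter P s by rewrite mem_filter hPy hy.
by rewrite E inE => /eqP.
Qed.

Lemma row_iff n r j : (1 < n)%N -> (1 <= r)%N -> (0 < j)%N ->
  (row_of n j == r) = (j \in iota (r.-1 * n.-1).+1 n.-1).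
Proof.
move=> hn hr hj; have hm : (0 < n.-1)%N by lia.
rewrite /row_of mem_iota eqn_leq -ltnS leq_divRL // ltn_divLR //.
have e1 : (r.+1 * n.-1 = r * n.-1 + n.-1)%N by rewrite mulSn addnC.
have e2 : (r.-1 * n.-1 + n.-1 = r * n.-1)%N by rewrite addnC -mulSn prednK.
rewrite e1; apply/idP/idP => /andP[h1 h2]; apply/andP; split; lia.
Qed.

Local Close Scope ring_scope.

Theorem proposition8p3 (n : nat) (u : seq bool) :
  (2 <= n)%N -> in_Sn n u ->
  (forall c : nat, (1 <= c <= n.-1)%N ->
     exists! j : nat, [/\ (1 <= j <= n * n.-1)%N, col_of n j = c & negative_skip n u j]) /\
  (forall r : nat, (1 <= r <= n.-1)%N ->
     exists! j : nat, [/\ (1 <= j <= n * n.-1)%N, row_of n j = r & negative_skip n u j]).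
Proof.
move=> hn hS; split.
- move=> c hc; have [j [[hj hcj hsk hneg] hu]] := col_unique hn hS hc.
  exists j; split.
    split => //; apply/(neg_iff hn hS hj); by rewrite hsk hneg.
  move=> j' [hj' hc' hn']; have := (neg_iff hn hS hj').1 hn' => /andP[s' n'].
  by symmetry; apply: hu.
- move=> r hr; have := row_count hn hS hr => /count1 [x [hx hP hu]].
  have e2 : (r.-1 * n.-1 + n.-1 = r * n.-1)%N by rewrite addnC -mulSn prednK //; lia.
  have hrn : (r * n.-1 <= n * n.-1)%N by rewrite leq_mul2r; apply/orP; right; lia.
  have hxN : (0 < x <= n * n.-1)%N.
    move: hx e2 hrn; rewrite mem_iota; move: (r.-1 * n.-1)%N (r * n.-1)%N (n * n.-1)%N => a b c; lia.
  exists x; split.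
    split => //.
      by apply/eqP; rewrite row_iff //; lia.
    by apply/(neg_iff hn hS hxN).
  move=> y [hy hry hny]; symmetry; apply: hu.
    by rewrite -row_iff ?hry //; lia.
  exact/(neg_iff hn hS hy).
Qed.
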